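(* Let $\gamma(z)=\sum_{n=1}^{\infty} z^{n-1}\left(\frac{1}{n}-\log\frac{n+1}{n}\right)$ for $|z|\le 1$, and for $k=2,3,\ldots$ and $|z|\le1$ let $\mathrm{Li}_k(z)=\sum_{n=1}^{\infty} \frac{z^n}{n^k}$. If $|z|\le 1$, then $$z\gamma(z)=\sum_{k=2}^{\infty}(-1)^k\frac{\mathrm{Li}_k(z)}{k}.$$ If in addition $z\neq 1$, then $$z^2\gamma(z)=z+(1-z)\log(1-z)-\sum_{k=2}^{\infty}\frac{\mathrm{Li}_k(z)-z}{k}.$$
   Context: For $z\neq 0$, $\log z=\ln|z|+i\,\mathrm{Arg}\,z$ with $-\pi<\mathrm{Arg}\,z\le\pi$. The series defining $\gamma(z)$ converges for $|z|\le 1$; $\gamma(z)$ is called the generalized-Euler-constant function. *)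

(* Defs.v *)
From Stdlib Require Import Reals.
From Coquelicot Require Import Coquelicot.
Open Scope R_scope.

(* Sum of a complex series, taken componentwise (= the limit of partial sums
   whenever the series converges in C). *)
Definition CSeries (a : nat -> C) : C :=
  (Series (fun n => Re (a n)), Series (fun n => Im (a n))).

(* Principal argument Arg z in (-PI, PI] (the usual atan2); Arg 0 := 0. *)
Definition Arg (z : C) : R :=
  let x := Re z in let y := Im z in
  if Rlt_dec 0 x then atan (y / x)
  else if Rlt_dec x 0 then
    (if Rle_dec 0 y then atan (y / x) + PI else atan (y / x) - PI)
  else (if Rlt_dec 0 y then PI / 2
        else if Rlt_dec y 0 then - (PI / 2) else 0).

Definition Clog (z : C) : C := (ln (Cmod z), Arg z).

(* gamma(z) = sum_{n>=1} z^(n-1) (1/n - log((n+1)/n)); index shifted n = m+1. *)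
Definition gamma_term (z : C) (m : nat) : C :=
  Cmult (pow_n z m)
    (Cminus (RtoC (/ INR (S m))) (Clog (RtoC (INR (S (S m)) / INR (S m))))).
Definition gammaC (z : C) : C := CSeries (gamma_term z).

(* Li_k(z) = sum_{n>=1} z^n / n^k; index shifted n = m+1. *)
Definition Li (k : nat) (z : C) : C :=
  CSeries (fun m : nat => Cdiv (pow_n z (S m)) (RtoC (INR (S m) ^ k))).

(* Main.v *)
Require Import Defs.
From Stdlib Require Import Reals Lra Lia.
From Coquelicot Require Import Coquelicot.
Open Scope R_scope.

Definition isC (a : nat -> C) (l : C) :=
  is_series (fun n => Re (a n)) (Re l) /\ is_series (fun n => Im (a n)) (Im l).

Lemma isC_CSeries a l : isC a l -> CSeries a = l.
Proof.
  intros [H1 H2]. unfold CSeries. rewrite (is_series_unique _ _ H1), (is_series_unique _ _ H2).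
  destruct l; reflexivity.
Qed.

Lemma isC_unique a l l' : isC a l -> isC a l' -> l = l'.
Proof. intros H H'. rewrite <- (isC_CSeries _ _ H), <- (isC_CSeries _ _ H'). reflexivity. Qed.

Lemma Re_sum_n (a : nat -> C) N : Re (sum_n (G := C_AbelianMonoid) a N) = sum_n (fun n => Re (a n)) N.
Proof.
  induction N. rewrite !sum_O. reflexivity.
  rewrite !sum_Sn, <- IHN. reflexivity.
Qed.

Lemma Im_sum_n (a : nat -> C) N : Im (sum_n (G := C_AbelianMonoid) a N) = sum_n (fun n => Im (a n)) N.
Proof.
  induction N. rewrite !sum_O. reflexivity.
  rewrite !sum_Sn, <- IHN. reflexivity.
Qed.

Lemma isC_ex a l : isC a l -> ex_series (V := C_NormedModule) a.
Proof.
  intros [H1 H2]. exists l. unfold is_series.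
  intros P [eps HP].
  assert (A1 := H1 (ball (Re l) eps) (locally_ball _ _)).
  assert (A2 := H2 (ball (Im l) eps) (locally_ball _ _)).
  simpl in A1, A2. unfold filtermap in *.
  generalize (filter_and _ _ A1 A2). apply filter_imp.
  intros n [B1 B2]. apply HP. split.
  - change (ball (Re l) eps (Re (sum_n (G := C_AbelianMonoid) a n))). rewrite Re_sum_n. exact B1.
  - change (ball (Im l) eps (Im (sum_n (G := C_AbelianMonoid) a n))). rewrite Im_sum_n. exact B2.
Qed.


Lemma isC_ext a b l : (forall n, a n = b n) -> isC a l -> isC b l.
Proof.
  intros E [H1 H2]; split; eapply is_series_ext; try eassumption; intro n; simpl; rewrite E; reflexivity.
Qed.

Lemma isC_plus a b la lb : isC a la -> isC b lb -> isC (fun n => Cplus (a n) (b n)) (Cplus la lb).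
Proof.
  intros [H1 H2] [H3 H4]; split.
  - apply (is_series_plus _ _ _ _ H1 H3).
  - apply (is_series_plus _ _ _ _ H2 H4).
Qed.

Lemma isC_minus a b la lb : isC a la -> isC b lb -> isC (fun n => Cminus (a n) (b n)) (Cminus la lb).
Proof.
  intros [H1 H2] [H3 H4]; split.
  - apply (is_series_minus _ _ _ _ H1 H3).
  - apply (is_series_minus _ _ _ _ H2 H4).
Qed.

Lemma isC_scal c a l : isC a l -> isC (fun n => Cmult c (a n)) (Cmult c l).
Proof.
  intros [H1 H2]; split; simpl.
  - apply (is_series_minus _ _ _ _ (is_series_scal_l (fst c) _ _ H1) (is_series_scal_l (snd c) _ _ H2)).
  - apply (is_series_plus _ _ _ _ (is_series_scal_l (fst c) _ _ H2) (is_series_scal_l (snd c) _ _ H1)).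
Qed.



Lemma is_series_zero : is_series (fun _ : nat => 0) 0.
Proof.
  unfold is_series. apply (filterlim_ext (fun _ => 0)).
  intro n. induction n. rewrite sum_O; reflexivity. rewrite sum_Sn, <- IHn. unfold plus; simpl; ring.
  apply filterlim_const.
Qed.

Lemma isC_R r l : is_series r l -> isC (fun n => RtoC (r n)) (RtoC l).
Proof. intros H; split; simpl. exact H. apply is_series_zero. Qed.

Lemma isC_shift a l : isC a l -> isC (fun n => a (S n)) (Cminus l (a 0%nat)).
Proof.
  intros [H1 H2]; split.
  - apply (is_series_incr_1 (fun n => Re (a n))). unfold plus; simpl; unfold Re; simpl.
    replace (fst l + - fst (a 0%nat) + fst (a 0%nat)) with (fst l) by ring. exact H1.
  - apply (is_series_incr_1 (fun n => Im (a n))). unfold plus; simpl; unfold Im; simpl.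
    replace (snd l + - snd (a 0%nat) + snd (a 0%nat)) with (snd l) by ring. exact H2.
Qed.

Lemma isC_unshift a l : isC (fun n => a (S n)) l -> isC a (Cplus l (a 0%nat)).
Proof.
  intros [H1 H2]; split.
  - apply (is_series_decr_1 (fun n => Re (a n))). unfold plus, opp; simpl; unfold Re; simpl.
    replace (fst l + fst (a 0%nat) + - fst (a 0%nat)) with (fst l) by ring. exact H1.
  - apply (is_series_decr_1 (fun n => Im (a n))). unfold plus, opp; simpl; unfold Im; simpl.
    replace (snd l + snd (a 0%nat) + - snd (a 0%nat)) with (snd l) by ring. exact H2.
Qed.


Lemma mvt_bound (f df : R -> R) K N :
  (forall t, 0 <= t <= 1 -> is_derive f t (df t)) ->
  (forall t, 0 <= t <= 1 -> Rabs (df t) <= K * t ^ N) ->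
  Rabs (f 1 - f 0) <= K / INR (S N).
Proof.
  intros Hd Hb.
  assert (HN : 0 < INR (S N)) by (apply lt_0_INR; lia).
  assert (Hg : forall s : R, (s = 1 \/ s = -1) ->
     f 1 - f 0 - s * (K / INR (S N)) = (fun t => f t - s * (K * t ^ (S N) / INR (S N))) 1
        - (fun t => f t - s * (K * t ^ (S N) / INR (S N))) 0).
  { intros s _. cbv beta. rewrite pow1, pow_i by lia. field. lra. }
  assert (Hm : forall s : R, (s = 1 \/ s = -1) -> s * (f 1 - f 0 - s * (K / INR (S N))) <= 0).
  { intros s Hs. rewrite (Hg s Hs).
    assert (HD : forall x, 0 <= x <= 1 -> is_derive (fun t => f t - s * (K * t ^ (S N) / INR (S N))) x
       (df x - s * (K * x ^ N))).
    { intros x Hx.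
      apply (is_derive_minus f (fun t => s * (K * t ^ (S N) / INR (S N)))).
      apply Hd; lra.
      remember (INR (S N)) as n. auto_derive. easy. change (match N with 0%nat => 1 | S _ => INR N + 1 end) with (INR (S N)). rewrite <- Heqn. field. lra. }
    destruct (MVT_gen (fun t => f t - s * (K * t ^ (S N) / INR (S N))) 0 1
       (fun t => df t - s * (K * t ^ N))) as [c [Hc Hc2]].
    - intros x Hx. rewrite Rmin_left in Hx by lra. rewrite Rmax_right in Hx by lra.
      apply HD; lra.
    - intros x Hx. rewrite Rmin_left in Hx by lra. rewrite Rmax_right in Hx by lra.
      apply continuity_pt_filterlim.
      apply (ex_derive_continuous (K := R_AbsRing) (V := R_NormedModule) (fun t => f t - s * (K * t ^ (S N) / INR (S N)))).
      eexists. apply HD. lra.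
    - rewrite Rmin_left in Hc by lra. rewrite Rmax_right in Hc by lra.
      rewrite Hc2. specialize (Hb c Hc). apply Rabs_le_between in Hb.
      destruct Hs; subst s; nra. }
  assert (H1 := Hm 1 (or_introl eq_refl)). assert (H2 := Hm (-1) (or_intror eq_refl)).
  apply Rabs_le; lra.
Qed.


Definition Dd (w : C) t := (1 - t * Re w)^2 + (t * Im w)^2.
Definition Lr (w : C) t := ln (Dd w t) / 2.
Definition La (w : C) t := atan (- (t * Im w) / (1 - t * Re w)).
Fixpoint PR (w : C) t N := match N with 0%nat => 0 | S n => PR w t n + t ^ (S n) * Re (pow_n w (S n)) / INR (S n) end.
Fixpoint PJ (w : C) t N := match N with 0%nat => 0 | S n => PJ w t n + t ^ (S n) * Im (pow_n w (S n)) / INR (S n) end.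
Definition E (w : C) N t := Cdiv (Copp (pow_n w (S N))) (Cminus 1 (Cmult (RtoC t) w)).

Lemma one_m_tw_neq (w : C) t : 1 - t * Re w <> 0 -> Cminus 1 (Cmult (RtoC t) w) <> 0%C.
Proof.
  intros H E0. apply H. apply (f_equal Re) in E0. destruct w as [a b]. simpl in E0. unfold Re; simpl. lra.
Qed.

Lemma E_step w N t : 1 - t * Re w <> 0 -> Cplus (E w N t) (pow_n w (S N)) = Cmult (RtoC t) (E w (S N) t).
Proof.
  intros H. assert (H' := one_m_tw_neq w t H). unfold E.
  change (pow_n w (S (S N))) with (Cmult w (pow_n w (S N))).
  field. exact H'.
Qed.

Lemma Dd_pos w t : 1 - t * Re w <> 0 -> 0 < Dd w t.
Proof. intros H. unfold Dd. assert (0 < (1 - t * Re w)^2) by (apply pow2_gt_0; auto). nra. Qed.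

Lemma E0_Re w t : 1 - t * Re w <> 0 -> Re (E w 0 t) = (- Re w + t * (Re w ^ 2 + Im w ^ 2)) / Dd w t.
Proof.
  intros H. assert (HD := Dd_pos w t H). unfold E, Dd in *. destruct w as [a b]. unfold Re, Im in *; simpl in *.
  field. nra.
Qed.

Lemma E0_Im w t : 1 - t * Re w <> 0 -> Im (E w 0 t) = (- Im w) / Dd w t.
Proof.
  intros H. assert (HD := Dd_pos w t H). unfold E, Dd in *. destruct w as [a b]. unfold Re, Im in *; simpl in *.
  field. nra.
Qed.

Lemma Re_Rmult t (x : C) : Re (Cmult (RtoC t) x) = t * Re x.
Proof. destruct x; unfold Re; simpl; ring. Qed.
Lemma Im_Rmult t (x : C) : Im (Cmult (RtoC t) x) = t * Im x.
Proof. destruct x; unfold Im; simpl; ring. Qed.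

Lemma der_R w N t : 1 - t * Re w <> 0 ->
  is_derive (fun t => Lr w t + PR w t N) t (t ^ N * Re (E w N t)).
Proof.
  intros H. induction N.
  - rewrite E0_Re by exact H. assert (HD := Dd_pos w t H).
    apply (is_derive_ext (Lr w)). intros; simpl; ring.
    unfold Lr. unfold Dd in *. auto_derive. lra. field. lra.
  - apply (is_derive_ext (fun t => (Lr w t + PR w t N) + (t ^ (S N) * Re (pow_n w (S N)) / INR (S N)))).
    { intros s. simpl. ring. }
    assert (Hs : 0 < INR (S N)) by (apply lt_0_INR; lia).
    assert (Hp : is_derive (fun t => t ^ (S N) * Re (pow_n w (S N)) / INR (S N)) t (t ^ N * Re (pow_n w (S N)))).
    { remember (INR (S N)) as n. remember (Re (pow_n w (S N))) as c. auto_derive. easy.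
      change (match N with 0%nat => 1 | S _ => INR N + 1 end) with (INR (S N)).
      rewrite <- Heqn. field. lra. }
    replace (t ^ S N * Re (E w (S N) t)) with (plus (t ^ N * Re (E w N t)) (t ^ N * Re (pow_n w (S N)))).
    apply (is_derive_plus (fun t => Lr w t + PR w t N) _ _ _ _ IHN Hp).
    transitivity (t ^ N * Re (Cmult (RtoC t) (E w (S N) t))).
    rewrite <- (E_step w N t H). unfold plus; simpl. unfold Re; simpl. ring.
    rewrite Re_Rmult. simpl. ring.
Qed.

Lemma der_I w N t : 1 - t * Re w <> 0 ->
  is_derive (fun t => La w t + PJ w t N) t (t ^ N * Im (E w N t)).
Proof.
  intros H. induction N.
  - rewrite E0_Im by exact H. assert (HD := Dd_pos w t H).
    apply (is_derive_ext (La w)). intros; simpl; ring.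
    unfold La.
    assert (Hi : is_derive (fun t => - (t * Im w) / (1 - t * Re w)) t (- Im w / (1 - t * Re w) ^ 2)).
    { auto_derive. exact H. field. exact H. }
    assert (Hc := is_derive_comp atan (fun t => - (t * Im w) / (1 - t * Re w)) t _ _ (is_derive_atan _) Hi).
    match type of Hc with is_derive _ _ ?v => replace (t ^ 0 * (- Im w / Dd w t)) with v end.
    exact Hc.
    unfold scal; simpl; unfold mult; simpl. unfold Rsqr, Dd in *. field. split. nra. exact H.
  - apply (is_derive_ext (fun t => (La w t + PJ w t N) + (t ^ (S N) * Im (pow_n w (S N)) / INR (S N)))).
    { intros s. simpl. ring. }
    assert (Hs : 0 < INR (S N)) by (apply lt_0_INR; lia).
    assert (Hp : is_derive (fun t => t ^ (S N) * Im (pow_n w (S N)) / INR (S N)) t (t ^ N * Im (pow_n w (S N)))).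
    { remember (INR (S N)) as n. remember (Im (pow_n w (S N))) as c. auto_derive. easy.
      change (match N with 0%nat => 1 | S _ => INR N + 1 end) with (INR (S N)).
      rewrite <- Heqn. field. lra. }
    replace (t ^ S N * Im (E w (S N) t)) with (plus (t ^ N * Im (E w N t)) (t ^ N * Im (pow_n w (S N)))).
    apply (is_derive_plus (fun t => La w t + PJ w t N) _ _ _ _ IHN Hp).
    transitivity (t ^ N * Im (Cmult (RtoC t) (E w (S N) t))).
    rewrite <- (E_step w N t H). unfold plus; simpl. unfold Im; simpl. ring.
    rewrite Im_Rmult. simpl. ring.
Qed.


Lemma Cmod_pow (w : C) n : Cmod (pow_n w n) = Cmod w ^ n.
Proof.
  induction n. simpl. apply Cmod_1.
  change (pow_n w (S n)) with (Cmult w (pow_n w n)). rewrite Cmod_mult, IHn. reflexivity.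
Qed.

Lemma cbound a t : a < 1 -> 0 <= t <= 1 -> Rmin 1 (1 - a) <= 1 - t * a.
Proof.
  intros Ha Ht. assert (H1 := Rmin_l 1 (1 - a)). assert (H2 := Rmin_r 1 (1 - a)).
  set (c := Rmin 1 (1 - a)) in *. nra.
Qed.

Lemma cpos a : a < 1 -> 0 < Rmin 1 (1 - a).
Proof. intros; apply Rmin_glb_lt; lra. Qed.

Lemma E_bound w N t : Re w < 1 -> 0 <= t <= 1 ->
  Cmod (E w N t) <= Cmod w ^ S N / Rmin 1 (1 - Re w).
Proof.
  intros Ha Ht. assert (Hc := cbound _ _ Ha Ht). assert (Hc0 := cpos _ Ha).
  assert (H1 : 1 - t * Re w <> 0) by lra.
  unfold E. rewrite Cmod_div by (apply one_m_tw_neq; exact H1).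
  rewrite Cmod_opp, Cmod_pow.
  assert (Hm : Rmin 1 (1 - Re w) <= Cmod (Cminus 1 (Cmult (RtoC t) w))).
  { eapply Rle_trans. 2: apply re_le_Cmod. destruct w as [a b]. unfold Re in *; simpl in *.
    rewrite Rabs_pos_eq; lra. }
  unfold Rdiv. apply Rmult_le_compat_l. apply pow_le, Cmod_ge_0.
  apply Rinv_le_contravar; lra.
Qed.

Lemma ln_sqrt' X : 0 < X -> ln (sqrt X) = ln X / 2.
Proof.
  intros H. assert (Hs := sqrt_lt_R0 X H).
  replace (ln X) with (ln (sqrt X * sqrt X)) by (rewrite sqrt_sqrt; lra).
  rewrite ln_mult by lra. field.
Qed.

Lemma PR0 w N : PR w 0 N = 0.
Proof. induction N; [reflexivity|].
  change (PR w 0 (S N)) with (PR w 0 N + 0 ^ (S N) * Re (pow_n w (S N)) / INR (S N)).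
  rewrite IHN, pow_i by lia. unfold Rdiv; ring. Qed.
Lemma PJ0 w N : PJ w 0 N = 0.
Proof. induction N; [reflexivity|].
  change (PJ w 0 (S N)) with (PJ w 0 N + 0 ^ (S N) * Im (pow_n w (S N)) / INR (S N)).
  rewrite IHN, pow_i by lia. unfold Rdiv; ring. Qed.

Lemma log_bound_R w N : Re w < 1 ->
  Rabs (ln (Cmod (Cminus 1 w)) + PR w 1 N) <= Cmod w ^ S N / Rmin 1 (1 - Re w) / INR (S N).
Proof.
  intros Ha.
  assert (Hf : ln (Cmod (Cminus 1 w)) + PR w 1 N = (fun t => Lr w t + PR w t N) 1 - (fun t => Lr w t + PR w t N) 0).
  { simpl. rewrite PR0. unfold Lr, Dd. replace ((1 - 0 * Re w) ^ 2 + (0 * Im w) ^ 2) with 1 by ring.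
    rewrite ln_1.
    replace (ln ((1 - 1 * Re w) ^ 2 + (1 * Im w) ^ 2) / 2) with (ln (Cmod (Cminus 1 w))). unfold Rdiv; ring.
    destruct w as [a b]; unfold Cmod, Re, Im in *; simpl in *. rewrite ln_sqrt'.
    f_equal. f_equal. ring.
    assert (0 < (1 + - a) ^ 2) by (apply pow2_gt_0; lra). nra. }
  rewrite Hf. apply (mvt_bound (fun t => Lr w t + PR w t N) (fun t => t ^ N * Re (E w N t)) (Cmod w ^ S N / Rmin 1 (1 - Re w)) N).
  - intros t Ht. apply der_R. assert (Hc := cbound _ _ Ha Ht). assert (Hc0 := cpos _ Ha). lra.
  - intros t Ht. rewrite Rabs_mult, Rabs_pos_eq by (apply pow_le; lra). rewrite Rmult_comm.
    apply Rmult_le_compat_r. apply pow_le; lra.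
    eapply Rle_trans. apply re_le_Cmod. apply E_bound; auto.
Qed.

Lemma im_le_Cmod (c : C) : Rabs (Im c) <= Cmod c.
Proof.
  destruct c as [a b]. unfold Cmod, Im; simpl. rewrite <- sqrt_Rsqr_abs. apply sqrt_le_1_alt.
  unfold Rsqr. nra.
Qed.

Lemma log_bound_I w N : Re w < 1 ->
  Rabs (Arg (Cminus 1 w) + PJ w 1 N) <= Cmod w ^ S N / Rmin 1 (1 - Re w) / INR (S N).
Proof.
  intros Ha.
  assert (Hf : Arg (Cminus 1 w) + PJ w 1 N = (fun t => La w t + PJ w t N) 1 - (fun t => La w t + PJ w t N) 0).
  { simpl. rewrite PJ0. unfold La. replace (- (0 * Im w) / (1 - 0 * Re w)) with 0 by (field; lra).
    rewrite atan_0. unfold Arg. destruct w as [a b]; unfold Re, Im in *; simpl in *.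
    destruct (Rlt_dec 0 (1 + - a)) as [_|Hn]. 2: lra.
    replace ((0 + - b) / (1 + - a)) with (- (1 * b) / (1 - 1 * a)) by (field; lra). ring. }
  rewrite Hf. apply (mvt_bound (fun t => La w t + PJ w t N) (fun t => t ^ N * Im (E w N t)) (Cmod w ^ S N / Rmin 1 (1 - Re w)) N).
  - intros t Ht. apply der_I. assert (Hc := cbound _ _ Ha Ht). assert (Hc0 := cpos _ Ha). lra.
  - intros t Ht. rewrite Rabs_mult, Rabs_pos_eq by (apply pow_le; lra). rewrite Rmult_comm.
    apply Rmult_le_compat_r. apply pow_le; lra.
    eapply Rle_trans. apply im_le_Cmod. apply E_bound; auto.
Qed.


Lemma lim_inv K : is_lim_seq (fun N => K / INR (S (S N))) 0.
Proof.
  replace 0 with (K * 0) by ring.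
  apply (is_lim_seq_scal_l (fun N => / INR (S (S N))) K 0).
  replace (Finite 0) with (Rbar_inv p_infty) by reflexivity.
  apply is_lim_seq_inv. 2: discriminate.
  apply (is_lim_seq_incr_1 (fun n => INR (S n))).
  apply (is_lim_seq_incr_1 INR). apply is_lim_seq_INR.
Qed.

Lemma series_of_bound (a : nat -> R) l K :
  (forall N, Rabs (sum_n a N - l) <= K / INR (S (S N))) -> is_series a l.
Proof.
  intros H. unfold is_series.
  change (is_lim_seq (sum_n a) l).
  apply (is_lim_seq_le_le (fun N => l - K / INR (S (S N))) _ (fun N => l + K / INR (S (S N)))).
  - intros N. specialize (H N). apply Rabs_le_between in H. lra.
  - replace (Finite l) with (Finite (l - 0)) by (f_equal; ring).
    apply (is_lim_seq_minus' (fun _ => l)). apply is_lim_seq_const. apply lim_inv.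
  - replace (Finite l) with (Finite (l + 0)) by (f_equal; ring).
    apply (is_lim_seq_plus' (fun _ => l)). apply is_lim_seq_const. apply lim_inv.
Qed.

Lemma Re_div_R (x : C) r : r <> 0 -> Re (Cdiv x (RtoC r)) = Re x / r.
Proof. intros H. destruct x as [a b]. unfold Re; simpl. field. exact H. Qed.
Lemma Im_div_R (x : C) r : r <> 0 -> Im (Cdiv x (RtoC r)) = Im x / r.
Proof. intros H. destruct x as [a b]. unfold Im; simpl. field. exact H. Qed.

Lemma pow_le1 x n : 0 <= x <= 1 -> x ^ n <= 1.
Proof. intros H. rewrite <- (pow1 n). apply pow_incr. exact H. Qed.

Lemma INR_S_neq n : INR (S n) <> 0.
Proof. apply not_0_INR. lia. Qed.

Lemma log_series w : Re w < 1 -> Cmod w <= 1 ->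
  isC (fun j => Cdiv (pow_n w (S j)) (RtoC (INR (S j)))) (Copp (Clog (Cminus 1 w))).
Proof.
  intros Ha Hw. assert (Hc := cpos _ Ha). split.
  - apply (series_of_bound _ _ (/ Rmin 1 (1 - Re w))). intros N.
    replace (sum_n (fun n : nat => Re (pow_n w (S n) / INR (S n))) N) with (PR w 1 (S N)).
    + replace (PR w 1 (S N) - Re (- Clog (1 - w))) with (ln (Cmod (Cminus 1 w)) + PR w 1 (S N))
        by (unfold Clog, Re; simpl; ring).
      eapply Rle_trans. apply log_bound_R; auto.
      unfold Rdiv. apply Rmult_le_compat_r. left; apply Rinv_0_lt_compat, lt_0_INR; lia.
      rewrite <- (Rmult_1_l (/ Rmin 1 (1 - Re w))) at 2. apply Rmult_le_compat_r.
      left; apply Rinv_0_lt_compat; auto. apply pow_le1; split; auto; apply Cmod_ge_0.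
    + induction N.
      * rewrite sum_O. simpl. field.
      * rewrite sum_Sn, <- IHN. change (PR w 1 (S (S N))) with (PR w 1 (S N) + 1 ^ (S (S N)) * Re (pow_n w (S (S N))) / INR (S (S N))).
        rewrite pow1. rewrite Re_div_R by apply INR_S_neq. change (plus ?x ?y) with (x + y). rewrite Rmult_1_l. reflexivity.
  - apply (series_of_bound _ _ (/ Rmin 1 (1 - Re w))). intros N.
    replace (sum_n (fun n : nat => Im (pow_n w (S n) / INR (S n))) N) with (PJ w 1 (S N)).
    + replace (PJ w 1 (S N) - Im (- Clog (1 - w))) with (Arg (Cminus 1 w) + PJ w 1 (S N))
        by (unfold Clog, Im; simpl; ring).
      eapply Rle_trans. apply log_bound_I; auto.
      unfold Rdiv. apply Rmult_le_compat_r. left; apply Rinv_0_lt_compat, lt_0_INR; lia.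
      rewrite <- (Rmult_1_l (/ Rmin 1 (1 - Re w))) at 2. apply Rmult_le_compat_r.
      left; apply Rinv_0_lt_compat; auto. apply pow_le1; split; auto; apply Cmod_ge_0.
    + induction N.
      * rewrite sum_O. simpl. field.
      * rewrite sum_Sn, <- IHN. change (PJ w 1 (S (S N))) with (PJ w 1 (S N) + 1 ^ (S (S N)) * Im (pow_n w (S (S N))) / INR (S (S N))).
        rewrite pow1. rewrite Im_div_R by apply INR_S_neq. change (plus ?x ?y) with (x + y). rewrite Rmult_1_l. reflexivity.
Qed.


Definition xx (i : nat) := / INR (S (S i)).

Lemma xx_bounds i : 0 < xx i <= 1/2.
Proof.
  unfold xx. rewrite !S_INR. assert (H := pos_INR i). split.
  apply Rinv_0_lt_compat; lra.
  replace (1/2) with (/ 2) by field. apply Rinv_le_contravar; lra.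
Qed.

Lemma ex_series_x2 : ex_series (fun i => xx i ^ 2).
Proof.
  apply (ex_series_le (K := R_AbsRing) (V := R_CompleteNormedModule) _ (fun i => / INR (S i) - / INR (S (S i)))).
  - intros n. change (norm (xx n ^ 2)) with (Rabs (xx n ^ 2)).
    rewrite Rabs_pos_eq by (apply pow2_ge_0). unfold xx. rewrite !S_INR. assert (H := pos_INR n).
    apply Rle_trans with (/ ((INR n + 1) * (INR n + 1 + 1))). 
    rewrite pow_inv. apply Rinv_le_contravar. nra. nra.
    right. field. lra.
  - exists 1. apply (series_of_bound _ _ 1). intros N.
    replace (sum_n (fun i : nat => / INR (S i) - / INR (S (S i))) N) with (1 - / INR (S (S N))).
    rewrite Rabs_left1. 2: { assert (0 < / INR (S (S N))) by (apply Rinv_0_lt_compat, lt_0_INR; lia). lra. }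
    unfold Rdiv; lra.
    induction N. rewrite sum_O. simpl. field.
    rewrite sum_Sn, <- IHN. change (plus ?x ?y) with (x + y). ring.
Qed.

Lemma ex_bdd (p c : nat -> R) K : (forall i, Rabs (p i) <= 1) -> (forall i, Rabs (c i) <= K * xx i ^ 2) ->
  ex_series (fun i => p i * c i).
Proof.
  intros Hp Hc. apply (ex_series_le (K := R_AbsRing) (V := R_CompleteNormedModule) _ (fun i => K * xx i ^ 2)).
  - intros n. change (norm (p n * c n)) with (Rabs (p n * c n)). rewrite Rabs_mult.
    specialize (Hp n). specialize (Hc n). apply Rle_trans with (1 * Rabs (c n)). apply Rmult_le_compat_r; auto using Rabs_pos. lra.
  - apply (ex_series_scal_l K (fun i => xx i ^ 2)). apply ex_series_x2.
Qed.

Lemma pow_n_RtoC y k : pow_n (RtoC y) k = RtoC (y ^ k).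
Proof.
  induction k. reflexivity. change (pow_n (RtoC y) (S k)) with (Cmult (RtoC y) (pow_n (RtoC y) k)).
  rewrite IHk. unfold RtoC, Cmult; simpl. f_equal; ring.
Qed.

Lemma log_bound_real y N : y < 1 ->
  Rabs (ln (1 - y) + PR (RtoC y) 1 N) <= Rabs y ^ S N / Rmin 1 (1 - y) / INR (S N).
Proof.
  intros H. assert (B := log_bound_R (RtoC y) N H).
  replace (Cminus 1 (RtoC y)) with (RtoC (1 - y)) in B by (unfold RtoC, Cminus, Cplus, Copp; simpl; f_equal; ring).
  rewrite !Cmod_R in B. rewrite (Rabs_pos_eq (1 - y)) in B by lra. exact B.
Qed.

Definition PP (s : R) M i := sum_n (fun m => s ^ (S (S m)) / INR (S (S m)) * xx i ^ (S (S m))) M.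
Definition hh (s : R) i := - ln (1 - s * xx i) - s * xx i.

Lemma PP_PR s M i : PP s M i = PR (RtoC (s * xx i)) 1 (S (S M)) - s * xx i.
Proof.
  unfold PP. induction M.
  - rewrite sum_O. cbn [PR]. rewrite !pow_n_RtoC. unfold Re; simpl. field.
  - rewrite sum_Sn, IHM. change (plus ?x ?y) with (x + y).
    change (PR (RtoC (s * xx i)) 1 (S (S (S M)))) with
      (PR (RtoC (s * xx i)) 1 (S (S M)) + 1 ^ (S (S (S M))) * Re (pow_n (RtoC (s * xx i)) (S (S (S M)))) / INR (S (S (S M)))).
    rewrite pow_n_RtoC, pow1. unfold Re, RtoC; cbn [fst]. rewrite Rpow_mult_distr. match goal with |- ?a = ?b => change (@eq R a b) end. field. apply INR_S_neq.
Qed.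

Lemma PP_h s M i : (s = 1 \/ s = -1) -> Rabs (PP s M i - hh s i) <= 2 * xx i ^ S (S (S M)).
Proof.
  intros Hs. assert (Hx := xx_bounds i).
  replace (PP s M i - hh s i) with (ln (1 - s * xx i) + PR (RtoC (s * xx i)) 1 (S (S M)))
    by (rewrite PP_PR; unfold hh; ring).
  assert (Hy : s * xx i < 1) by (destruct Hs; subst; lra).
  eapply Rle_trans. apply log_bound_real; auto.
  assert (Ha : Rabs (s * xx i) = xx i).
  { rewrite Rabs_mult, (Rabs_pos_eq (xx i)) by lra. destruct Hs; subst.
    rewrite Rabs_R1; ring. rewrite Rabs_left by lra. ring. }
  rewrite Ha.
  assert (Hc : 1/2 <= Rmin 1 (1 - s * xx i)) by (apply Rmin_glb; destruct Hs; subst; lra).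
  assert (HN : 1 <= INR (S (S (S M)))) by (apply (le_INR 1); lia).
  assert (Hp : 0 < xx i ^ S (S (S M))) by (apply pow_lt; lra).
  unfold Rdiv. rewrite Rmult_assoc.
  rewrite Rmult_comm. apply Rmult_le_compat_r. lra.
  apply Rle_trans with (/ (1/2) * / 1).
  apply Rmult_le_compat. left; apply Rinv_0_lt_compat; lra. left; apply Rinv_0_lt_compat; lra.
  apply Rinv_le_contravar; lra. apply Rinv_le_contravar; lra. lra.
Qed.


Lemma series_of_bound' (a : nat -> R) l (e : nat -> R) :
  is_lim_seq e 0 -> (forall N, Rabs (sum_n a N - l) <= e N) -> is_series a l.
Proof.
  intros He H. unfold is_series.
  change (is_lim_seq (sum_n a) l).
  apply (is_lim_seq_le_le (fun N => l - e N) _ (fun N => l + e N)).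
  - intros N. specialize (H N). apply Rabs_le_between in H. lra.
  - replace (Finite l) with (Finite (l - 0)) by (f_equal; ring).
    apply (is_lim_seq_minus' (fun _ => l)). apply is_lim_seq_const. exact He.
  - replace (Finite l) with (Finite (l + 0)) by (f_equal; ring).
    apply (is_lim_seq_plus' (fun _ => l)). apply is_lim_seq_const. exact He.
Qed.

Lemma s2 s : (s = 1 \/ s = -1) -> s ^ 2 = 1.
Proof. intros [->| ->]; ring. Qed.

Lemma xpow_le2 i k : (2 <= k)%nat -> 0 <= xx i ^ k <= xx i ^ 2.
Proof.
  intros Hk. assert (Hx := xx_bounds i). split. apply pow_le; lra.
  replace k with (2 + (k - 2))%nat by lia. rewrite pow_add.
  rewrite <- (Rmult_1_r (xx i ^ 2)) at 2. apply Rmult_le_compat_l. apply pow_le; lra.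
  rewrite <- (pow1 (k - 2)). apply pow_incr. lra.
Qed.

Lemma xpow_small i M : xx i ^ S (S (S M)) <= (1/2) ^ S M * xx i ^ 2.
Proof.
  assert (Hx := xx_bounds i). replace (S (S (S M))) with (S M + 2)%nat by lia. rewrite pow_add.
  apply Rmult_le_compat_r. apply pow_le; lra. apply pow_incr. lra.
Qed.

Lemma hh_bound s i : (s = 1 \/ s = -1) -> Rabs (hh s i) <= 2 * xx i ^ 2.
Proof.
  intros Hs. assert (B := PP_h s 0 i Hs). assert (Hx := xx_bounds i).
  assert (E0 : PP s 0 i = xx i ^ 2 / 2).
  { unfold PP. rewrite sum_O. replace (s ^ 2) with 1 by (symmetry; apply s2; auto). simpl. field. }
  rewrite E0 in B. apply Rabs_le_between in B. apply Rabs_le.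
  assert (H3 := xpow_small i 0). simpl in H3. assert (0 <= xx i ^ 2) by (apply pow2_ge_0).
  simpl in *. lra.
Qed.

Lemma PP_bound s M i : (s = 1 \/ s = -1) -> Rabs (PP s M i) <= 4 * xx i ^ 2.
Proof.
  intros Hs. assert (B := PP_h s M i Hs). assert (B2 := hh_bound s i Hs).
  assert (H3 := xpow_le2 i (S (S (S M))) ltac:(lia)).
  apply Rabs_le_between in B. apply Rabs_le_between in B2. apply Rabs_le. lra.
Qed.

Lemma DS_ex p s : (forall i, Rabs (p i) <= 1) -> (s = 1 \/ s = -1) ->
  ex_series (fun i => p i * hh s i) /\
  (forall k, (2 <= k)%nat -> ex_series (fun i => p i * xx i ^ k)) /\
  (forall M, ex_series (fun i => p i * PP s M i)).
Proof.
  intros Hp Hs. split; [|split].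
  - apply (ex_bdd _ _ 2); auto. intros; apply hh_bound; auto.
  - intros k Hk. apply (ex_bdd _ _ 1); auto. intros i. rewrite Rmult_1_l.
    destruct (xpow_le2 i k Hk). rewrite Rabs_pos_eq; lra.
  - intros M. apply (ex_bdd _ _ 4); auto. intros; apply PP_bound; auto.
Qed.

Lemma DS_partial p s M : (forall i, Rabs (p i) <= 1) -> (s = 1 \/ s = -1) ->
  sum_n (fun m => s ^ S (S m) / INR (S (S m)) * Series (fun i => p i * xx i ^ S (S m))) M
  = Series (fun i => p i * PP s M i).
Proof.
  intros Hp Hs. destruct (DS_ex p s Hp Hs) as [_ [Hk HM]]. induction M.
  - rewrite sum_O. rewrite <- Series_scal_l. apply Series_ext. intros i. unfold PP. rewrite sum_O. ring.
  - rewrite sum_Sn, IHM. change (plus ?x ?y) with (x + y).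
    rewrite <- Series_scal_l. rewrite <- Series_plus. 2: apply HM.
    2: { apply (ex_series_scal_l (K := R_AbsRing) (V := R_NormedModule) (s ^ S (S (S M)) / INR (S (S (S M))))). apply Hk. lia. }
    apply Series_ext. intros i. unfold PP. rewrite sum_Sn. change (plus ?x ?y) with (x + y). ring.
Qed.

Lemma DS p s : (forall i, Rabs (p i) <= 1) -> (s = 1 \/ s = -1) ->
  is_series (fun m => s ^ S (S m) / INR (S (S m)) * Series (fun i => p i * xx i ^ S (S m)))
     (Series (fun i => p i * hh s i)).
Proof.
  intros Hp Hs. destruct (DS_ex p s Hp Hs) as [Hh [Hk HM]].
  set (S2 := Series (fun i => xx i ^ 2)).
  apply (series_of_bound' _ _ (fun M => S2 * (1/2) ^ M)).
  - replace 0 with (S2 * 0) by ring. apply (is_lim_seq_scal_l (fun M => (1/2)^M) S2 0).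
    apply is_lim_seq_geom. rewrite Rabs_pos_eq; lra.
  - intros M. rewrite DS_partial by auto. rewrite <- Series_minus by auto.
    assert (Hb : forall i, 0 <= Rabs (p i * PP s M i - p i * hh s i) <= (2 * (1/2) ^ S M) * xx i ^ 2).
    { intros i. split. apply Rabs_pos. rewrite <- Rmult_minus_distr_l, Rabs_mult.
      apply Rle_trans with (1 * Rabs (PP s M i - hh s i)). apply Rmult_le_compat_r; auto using Rabs_pos.
      rewrite Rmult_1_l. eapply Rle_trans. apply PP_h; auto.
      assert (H := xpow_small i M). lra. }
    assert (Hex : ex_series (fun i => (2 * (1/2) ^ S M) * xx i ^ 2)).
    { apply (ex_series_scal_l (K := R_AbsRing) (V := R_NormedModule) (2 * (1/2) ^ S M)). apply ex_series_x2. }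
    eapply Rle_trans. apply Series_Rabs.
    { apply (ex_series_le (K := R_AbsRing) (V := R_CompleteNormedModule) (fun i => Rabs (p i * PP s M i - p i * hh s i)) (fun i => (2 * (1/2) ^ S M) * xx i ^ 2)); [|exact Hex].
      intros i. change (norm (Rabs (p i * PP s M i - p i * hh s i))) with (Rabs (Rabs (p i * PP s M i - p i * hh s i))).
      rewrite Rabs_Rabsolu. apply Hb. }
    eapply Rle_trans. apply Series_le. apply Hb. exact Hex.
    rewrite Series_scal_l. unfold S2. simpl. right. field.
Qed.


Lemma Cdiv_R (u : C) r : r <> 0 -> Cdiv u (RtoC r) = Cmult u (RtoC (/ r)).
Proof. intros H. destruct u as [a b]. unfold Cdiv, Cmult, Cinv, RtoC; simpl. f_equal; field; auto. Qed.

Lemma Re_mulR (x : C) r : Re (Cmult x (RtoC r)) = Re x * r.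
Proof. destruct x; unfold Re; simpl; ring. Qed.
Lemma Im_mulR (x : C) r : Im (Cmult x (RtoC r)) = Im x * r.
Proof. destruct x; unfold Im; simpl; ring. Qed.

Lemma Clog_R r : 0 < r -> Clog (RtoC r) = RtoC (ln r).
Proof.
  intros H. unfold Clog. rewrite Cmod_R, Rabs_pos_eq by lra. unfold Arg, RtoC, Re, Im; simpl.
  destruct (Rlt_dec 0 r); [|lra]. unfold Rdiv. rewrite Rmult_0_l, atan_0. reflexivity.
Qed.

Section Z.
Variable z : C.
Hypothesis hz : Cmod z <= 1.

Lemma pz_bound i : Rabs (Re (pow_n z i)) <= 1.
Proof. eapply Rle_trans. apply re_le_Cmod. rewrite Cmod_pow. apply pow_le1. split; auto. apply Cmod_ge_0. Qed.
Lemma qz_bound i : Rabs (Im (pow_n z i)) <= 1.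
Proof. eapply Rle_trans. apply im_le_Cmod. rewrite Cmod_pow. apply pow_le1. split; auto. apply Cmod_ge_0. Qed.

Lemma isC_coef (c : nat -> R) :
  ex_series (fun i => Re (pow_n z i) * c i) -> ex_series (fun i => Im (pow_n z i) * c i) ->
  isC (fun i => Cmult (pow_n z i) (RtoC (c i))) (CSeries (fun i => Cmult (pow_n z i) (RtoC (c i)))).
Proof.
  intros H1 H2. split; unfold CSeries.
  - apply (is_series_ext (fun i => Re (pow_n z i) * c i)). intros; symmetry; apply Re_mulR.
    change (Re (?a, ?b)) with a.
    rewrite (Series_ext _ (fun i => Re (pow_n z i) * c i)). apply Series_correct; auto.
    intros; apply Re_mulR.
  - apply (is_series_ext (fun i => Im (pow_n z i) * c i)). intros; symmetry; apply Im_mulR.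
    change (Im (?a, ?b)) with b.
    rewrite (Series_ext _ (fun i => Im (pow_n z i) * c i)). apply Series_correct; auto.
    intros; apply Im_mulR.
Qed.

Definition Ak k := CSeries (fun i => Cmult (pow_n z i) (RtoC (xx i ^ k))).
Definition Hs s := CSeries (fun i => Cmult (pow_n z i) (RtoC (hh s i))).

Lemma isC_Ak k : (2 <= k)%nat -> isC (fun i => Cmult (pow_n z i) (RtoC (xx i ^ k))) (Ak k).
Proof.
  intros Hk. apply isC_coef.
  apply (DS_ex _ 1 pz_bound (or_introl eq_refl)); auto.
  apply (DS_ex _ 1 qz_bound (or_introl eq_refl)); auto.
Qed.

Lemma isC_Hs s : (s = 1 \/ s = -1) -> isC (fun i => Cmult (pow_n z i) (RtoC (hh s i))) (Hs s).
Proof.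
  intros Hs'. apply isC_coef.
  apply (DS_ex _ s pz_bound Hs').
  apply (DS_ex _ s qz_bound Hs').
Qed.

Lemma DSC s : (s = 1 \/ s = -1) ->
  isC (fun m => Cmult (RtoC (s ^ S (S m) / INR (S (S m)))) (Ak (S (S m)))) (Hs s).
Proof.
  intros Hs'. split.
  - apply (is_series_ext (fun m => s ^ S (S m) / INR (S (S m)) * Series (fun i => Re (pow_n z i) * xx i ^ S (S m)))).
    { intros m. rewrite Re_Rmult. f_equal. unfold Ak, CSeries. change (Re (?a, ?b)) with a. apply Series_ext.
      intros; rewrite Re_mulR; reflexivity. }
    unfold Hs, CSeries. change (Re (?a, ?b)) with a.
    rewrite (Series_ext _ (fun i => Re (pow_n z i) * hh s i)) by (intros; rewrite Re_mulR; reflexivity).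
    apply DS; auto. apply pz_bound.
  - apply (is_series_ext (fun m => s ^ S (S m) / INR (S (S m)) * Series (fun i => Im (pow_n z i) * xx i ^ S (S m)))).
    { intros m. rewrite Im_Rmult. f_equal. unfold Ak, CSeries. change (Im (?a, ?b)) with b. apply Series_ext.
      intros; rewrite Im_mulR; reflexivity. }
    unfold Hs, CSeries. change (Im (?a, ?b)) with b.
    rewrite (Series_ext _ (fun i => Im (pow_n z i) * hh s i)) by (intros; rewrite Im_mulR; reflexivity).
    apply DS; auto. apply qz_bound.
Qed.

Lemma Li_eq k : (2 <= k)%nat -> Li k z = Cplus (Cmult (Cmult z z) (Ak k)) z.
Proof.
  intros Hk. unfold Li. apply isC_CSeries.
  replace z with (Cdiv (pow_n z 1) (RtoC (INR 1 ^ k))) at 3.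
  apply (isC_unshift (fun m => Cdiv (pow_n z (S m)) (RtoC (INR (S m) ^ k)))).
  eapply isC_ext. 2: apply (isC_scal (Cmult z z) _ _ (isC_Ak k Hk)).
  - intros i. cbv beta. rewrite Cdiv_R. 2: { apply pow_nonzero. apply INR_S_neq. }
    unfold xx. rewrite pow_inv. change (pow_n z (S (S i))) with (Cmult z (Cmult z (pow_n z i))).
    ring.
  - simpl. rewrite pow1. rewrite Cdiv_R by lra. destruct z; unfold Cmult, RtoC; simpl; f_equal; field.
Qed.
End Z.


Lemma INR_pos n : 0 < INR (S n).
Proof. apply lt_0_INR; lia. Qed.

Lemma gamma_term_eq z m : gamma_term z m =
  Cmult (pow_n z m) (RtoC (/ INR (S m) - ln (INR (S (S m)) / INR (S m)))).
Proof.
  unfold gamma_term. rewrite Clog_R.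
  2: { apply Rdiv_lt_0_compat; apply INR_pos. }
  f_equal. unfold Cminus, Cplus, Copp, RtoC; simpl. f_equal; ring.
Qed.

Lemma gamma1 z : Cmod z <= 1 -> isC (gamma_term z) (Cplus (Cmult z (Hs z (-1))) (RtoC (1 - ln 2))).
Proof.
  intros hz.
  replace (RtoC (1 - ln 2)) with (gamma_term z 0).
  2: { rewrite gamma_term_eq. change (pow_n z 0) with (RtoC 1).
       replace (INR 2 / INR 1) with 2 by (simpl; field). replace (/ INR 1) with 1 by (simpl; field).
       unfold Cmult, RtoC; simpl. f_equal; ring. }
  apply (isC_unshift (gamma_term z)).
  eapply isC_ext. 2: apply (isC_scal z _ _ (isC_Hs z hz (-1) (or_intror eq_refl))).
  intros i. cbv beta. rewrite gamma_term_eq. change (pow_n z (S i)) with (Cmult z (pow_n z i)).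
  replace (hh (-1) i) with (/ INR (S (S i)) - ln (INR (S (S (S i))) / INR (S (S i)))).
  ring.
  unfold hh, xx. assert (H := INR_pos (S i)).
  replace (1 - -1 * / INR (S (S i))) with (INR (S (S (S i))) / INR (S (S i))).
  ring. rewrite (S_INR (S (S i))). field. lra.
Qed.

Lemma RtoC_div a b : RtoC (a / b) = Cmult (RtoC a) (RtoC (/ b)).
Proof. unfold RtoC, Cmult; simpl. f_equal; unfold Rdiv; ring. Qed.

Lemma part1 z : Cmod z <= 1 ->
  isC (fun m : nat =>
      Cmult (RtoC ((-1) ^ (m + 2))) (Cdiv (Li (m + 2) z) (RtoC (INR (m + 2)))))
      (Cmult z (gammaC z)).
Proof.
  intros hz.
  assert (HL := log_series (RtoC (-1)) ltac:(unfold Re, RtoC; simpl; lra)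
     ltac:(rewrite Cmod_R, Rabs_left by lra; lra)).
  set (u := fun j => Cdiv (pow_n (RtoC (-1)) (S j)) (RtoC (INR (S j)))) in HL.
  assert (H1 := isC_scal z _ _ (isC_shift _ _ HL)).
  assert (H2 := isC_scal (Cmult z z) _ _ (DSC z hz (-1) (or_intror eq_refl))).
  assert (H3 := isC_plus _ _ _ _ H1 H2).
  unfold gammaC. rewrite (isC_CSeries _ _ (gamma1 z hz)).
  eapply isC_ext; [|replace (Cmult z (Cplus (Cmult z (Hs z (-1))) (RtoC (1 - ln 2)))) with
      (Cplus (Cmult z (Cminus (Copp (Clog (Cminus 1 (RtoC (-1))))) (u 0%nat)))
             (Cmult (Cmult z z) (Hs z (-1)))); [exact H3|]].
  - intros m. cbv beta. replace (m + 2)%nat with (S (S m)) by lia.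
    rewrite Li_eq by (auto; lia). unfold u. rewrite pow_n_RtoC.
    rewrite !Cdiv_R by apply INR_S_neq. rewrite RtoC_div. ring.
  - unfold u. replace (Cminus 1 (RtoC (-1))) with (RtoC 2) by (unfold RtoC, Cminus, Cplus, Copp; simpl; f_equal; ring).
    rewrite Clog_R by lra. rewrite pow_n_RtoC. rewrite Cdiv_R by apply INR_S_neq.
    change (INR 1) with 1. destruct z as [a b]. destruct (Hs (a, b) (-1)) as [c d].
    unfold Cplus, Cminus, Cmult, Copp, RtoC; simpl. f_equal; field.
Qed.

Definition qq i := / INR (S i) - / INR (S (S i)).

Lemma qq_bound i : Rabs (qq i) <= 2 * xx i ^ 2.
Proof.
  unfold qq, xx. assert (H := pos_INR i). rewrite !S_INR.
  replace (/ (INR i + 1) - / (INR i + 1 + 1)) with (/ ((INR i + 1) * (INR i + 1 + 1))) by (field; lra).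
  rewrite Rabs_pos_eq by (left; apply Rinv_0_lt_compat; nra).
  rewrite pow_inv. replace (2 * / (INR i + 1 + 1) ^ 2) with (/ ((INR i + 1 + 1) ^ 2 / 2)) by (field; lra).
  apply Rinv_le_contravar. nra. nra.
Qed.

Lemma Re_lt_1 z : Cmod z <= 1 -> z <> RtoC 1 -> Re z < 1.
Proof.
  intros hz hne. destruct (Rlt_dec (Re z) 1) as [h|h]; auto. exfalso. apply hne.
  assert (H2 := Cmod2_alt z). assert (H0 := Cmod_ge_0 z).
  destruct z as [a b]. unfold Re, Im, RtoC in *; simpl in *.
  assert (b = 0) by nra. assert (a = 1) by nra. subst. reflexivity.
Qed.

Lemma part2 z : Cmod z <= 1 -> z <> RtoC 1 ->
   isC (fun m : nat => Cdiv (Cminus (Li (m + 2) z) z) (RtoC (INR (m + 2))))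
     (Cmult (Cmult z z) (Hs z 1)) /\
   Cmult (Cmult z z) (gammaC z) =
      Cminus (Cplus z (Cmult (Cminus (RtoC 1) z) (Clog (Cminus (RtoC 1) z))))
        (Cmult (Cmult z z) (Hs z 1)).
Proof.
  intros hz hne. assert (Ha := Re_lt_1 z hz hne). split.
  - eapply isC_ext. 2: apply (isC_scal (Cmult z z) _ _ (DSC z hz 1 (or_introl eq_refl))).
    intros m. cbv beta. replace (m + 2)%nat with (S (S m)) by lia.
    rewrite Li_eq by (auto; lia). rewrite pow1.
    rewrite !Cdiv_R by apply INR_S_neq. rewrite RtoC_div. ring.
  - assert (HQ : isC (fun i => Cmult (pow_n z i) (RtoC (qq i))) (CSeries (fun i => Cmult (pow_n z i) (RtoC (qq i))))).
    { apply isC_coef; auto; apply (ex_bdd _ _ 2); auto using pz_bound, qz_bound, qq_bound. }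
    set (Q := CSeries (fun i => Cmult (pow_n z i) (RtoC (qq i)))) in HQ.
    assert (HL := log_series z Ha hz).
    set (a := fun j => Cdiv (pow_n z (S j)) (RtoC (INR (S j)))) in HL.
    assert (E1 : Cminus (Cminus (Copp (Clog (Cminus 1 z))) (a 0%nat)) (Cmult z (Copp (Clog (Cminus 1 z))))
                 = Cmult (Copp (Cmult z z)) Q).
    { apply (isC_unique (fun j => Cminus (a (S j)) (Cmult z (a j)))).
      apply isC_minus. apply (isC_shift a). exact HL. apply isC_scal. exact HL.
      eapply isC_ext. 2: apply (isC_scal (Copp (Cmult z z)) _ _ HQ).
      intros j. unfold a, qq. rewrite !Cdiv_R by apply INR_S_neq.
      change (pow_n z (S (S j))) with (Cmult z (pow_n z (S j))).
      change (pow_n z (S j)) with (Cmult z (pow_n z j)).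
      unfold Rminus. replace (RtoC (/ INR (S j) + - / INR (S (S j)))) with
        (Cminus (RtoC (/ INR (S j))) (RtoC (/ INR (S (S j))))) by (unfold RtoC, Cminus, Cplus, Copp; simpl; f_equal; ring).
      ring. }
    assert (E2 : gammaC z = Cminus Q (Hs z 1)).
    { unfold gammaC. apply isC_CSeries.
      eapply isC_ext. 2: apply (isC_minus _ _ _ _ HQ (isC_Hs z hz 1 (or_introl eq_refl))).
      intros i. cbv beta. rewrite gamma_term_eq.
      replace (/ INR (S i) - ln (INR (S (S i)) / INR (S i))) with (qq i - hh 1 i).
      destruct (pow_n z i) as [c d]. unfold Cmult, Cminus, Cplus, Copp, RtoC; simpl. f_equal; ring.
      unfold qq, hh, xx. assert (H1 := INR_pos i). assert (H2 := INR_pos (S i)).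
      replace (1 - 1 * / INR (S (S i))) with (/ (INR (S (S i)) / INR (S i))).
      rewrite ln_Rinv by (apply Rdiv_lt_0_compat; lra). ring.
      rewrite (S_INR (S i)). field. split; lra. }
    rewrite E2.
    assert (Ea : a 0%nat = z).
    { unfold a. rewrite Cdiv_R by apply INR_S_neq. change (INR 1) with 1. rewrite Rinv_1.
      destruct z as [x y]. unfold Cmult, RtoC; simpl. f_equal; ring. }
    rewrite Ea in E1.
    change (Cminus (RtoC 1) z) with (Cminus 1 z).
    set (Lg := Clog (Cminus 1 z)) in *.
    assert (E3 : Cmult (Cmult z z) Q = Cplus z (Cmult (Cminus 1 z) Lg)).
    { replace (Cmult (Cmult z z) Q) with (Copp (Cmult (Copp (Cmult z z)) Q)) by ring.
      rewrite <- E1. ring. }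
    rewrite <- E3. ring.
Qed.


(* Sums over k = 2,3,... are written with k = m + 2. *)
Theorem theorem3 (z : C) (hz : Cmod z <= 1) :
  (ex_series (V := C_NormedModule) (fun m : nat =>
      Cmult (RtoC ((-1) ^ (m + 2))) (Cdiv (Li (m + 2) z) (RtoC (INR (m + 2)))))
   /\ Cmult z (gammaC z) =
      CSeries (fun m : nat =>
      Cmult (RtoC ((-1) ^ (m + 2))) (Cdiv (Li (m + 2) z) (RtoC (INR (m + 2))))))
  /\
  (z <> RtoC 1 ->
   ex_series (V := C_NormedModule) (fun m : nat => Cdiv (Cminus (Li (m + 2) z) z) (RtoC (INR (m + 2))))
   /\ Cmult (Cmult z z) (gammaC z) =
      Cminus (Cplus z (Cmult (Cminus (RtoC 1) z) (Clog (Cminus (RtoC 1) z))))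
        (CSeries (fun m : nat => Cdiv (Cminus (Li (m + 2) z) z) (RtoC (INR (m + 2)))))).
Proof.
  split.
  - assert (H := part1 z hz). split. apply (isC_ex _ _ H). symmetry. apply isC_CSeries. exact H.
  - intros hne. destruct (part2 z hz hne) as [H E]. split. apply (isC_ex _ _ H).
    rewrite E. f_equal. symmetry. apply isC_CSeries. exact H.
Qed.
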